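(* Let $f:X\to Y$ be a function and $(Y,\preceq)$ a WQO, and define $x\preceq_f x'$ iff $f(x)\preceq f(x')$. Then $I\subseteq X$ is an ideal of $(X,\preceq_f)$ if and only if $I=f^{-1}(J)$ for some ideal $J$ of $(Y,\preceq)$ such that $\downarrow_\preceq f(f^{-1}(J))=J$.
   Context: For a quasi-order $\preceq$ on $Y$, $\downarrow_\preceq S=\{y\mid\exists s\in S: y\preceq s\}$. An ideal of a WQO is a nonempty subset that is downward closed and directed (any two elements have a common upper bound in the set). *)

(* Defs.v *)
Definition quasi_order {Y : Type} (le : Y -> Y -> Prop) : Prop :=
  (forall y, le y y) /\ (forall x y z, le x y -> le y z -> le x z).

Definition wqo {Y : Type} (le : Y -> Y -> Prop) : Prop :=
  quasi_order le /\
  (forall s : nat -> Y, exists i j, i < j /\ le (s i) (s j)).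

Definition down {Y : Type} (le : Y -> Y -> Prop) (S : Y -> Prop) : Y -> Prop :=
  fun y => exists s, S s /\ le y s.

Definition downward_closed {Y : Type} (le : Y -> Y -> Prop) (S : Y -> Prop) : Prop :=
  forall x y, S y -> le x y -> S x.

Definition directed {Y : Type} (le : Y -> Y -> Prop) (S : Y -> Prop) : Prop :=
  forall x y, S x -> S y -> exists z, S z /\ le x z /\ le y z.

Definition ideal {Y : Type} (le : Y -> Y -> Prop) (S : Y -> Prop) : Prop :=
  (exists y, S y) /\ downward_closed le S /\ directed le S.

Definition induced {X Y : Type} (f : X -> Y) (le : Y -> Y -> Prop) : X -> X -> Prop :=
  fun x x' => le (f x) (f x').

Definition preimage {X Y : Type} (f : X -> Y) (J : Y -> Prop) : X -> Prop :=
  fun x => J (f x).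

Definition image {X Y : Type} (f : X -> Y) (I : X -> Prop) : Y -> Prop :=
  fun y => exists x, I x /\ f x = y.

Definition set_eq {T : Type} (A B : T -> Prop) : Prop := forall t, A t <-> B t.

(* Main.v *)
Require Import Defs.

Theorem mainTheorem8 (X Y : Type) (f : X -> Y) (le : Y -> Y -> Prop)
  (Hwqo : wqo le) (I : X -> Prop) :
  ideal (induced f le) I <->
  exists J : Y -> Prop,
    ideal le J /\ set_eq I (preimage f J) /\
    set_eq (down le (image f (preimage f J))) J.
Proof.
  destruct Hwqo as [[Hrefl Htrans] _].
  unfold ideal, downward_closed, directed, set_eq, down, image, preimage, induced in *.
  split.
  - intros [[x0 Hx0] [Hdc Hdir]].
    exists (fun y => exists s, (exists x, I x /\ f x = s) /\ le y s).
    assert (HI : forall x, I x <-> exists s, (exists x', I x' /\ f x' = s) /\ le (f x) s).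
    { intro x; split.
      - intro Hx. exists (f x). split; eauto.
      - intros [s [[x' [Hx' <-]] Hle]]. eauto. }
    split; [|split].
    + split; [exists (f x0), (f x0); split; eauto|split].
      * intros a b [s [Hs Hb]] Hab. exists s; split; eauto.
      * intros a b [s1 [[x1 [H1 <-]] Ha]] [s2 [[x2 [H2 <-]] Hb]].
        destruct (Hdir x1 x2 H1 H2) as [z [Hz [Hz1 Hz2]]].
        exists (f z). split; [exists (f z); split; eauto|split; eauto].
    + exact HI.
    + intro t; split.
      * intros [s [[x [Hx <-]] Hts]]. destruct Hx as [s' [Hs' Hle]].
        exists s'; split; eauto.
      * intros Ht. destruct Ht as [s [[x [Hx <-]] Hle]].
        exists (f x). split; [|exact Hle]. exists x. split; [|reflexivity].
        exists (f x); split; eauto.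
  - intros [J [[[y0 Hy0] [Hdc Hdir]] [HI Hdown]]].
    split; [|split].
    + apply Hdown in Hy0. destruct Hy0 as [s [[x [Hx <-]] _]].
      exists x. apply HI; exact Hx.
    + intros a b Hb Hab. apply HI. apply HI in Hb. eauto.
    + intros a b Ha Hb. apply HI in Ha. apply HI in Hb.
      destruct (Hdir _ _ Ha Hb) as [z [Hz [H1 H2]]].
      apply Hdown in Hz. destruct Hz as [s [[x [Hx <-]] Hle]].
      exists x. split; [apply HI; exact Hx|split; eauto].
Qed.
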